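(* For every $\lambda>\lambda^*$, $e(\lambda)>-\frac{1}{\gamma b^*}$, where $b^*=\max_{1\le j\le n}b_j$.
   Context: Standing setup. Let $\gamma>0$; let $a_1,\dots,a_p>0$ with weights $\omega_i>0$, $\sum_i\omega_i=1$, and $b_1,\dots,b_n>0$ with weights $\pi_j>0$, $\sum_j\pi_j=1$. Let $\mu$ be the limiting spectral distribution of $\mathbf{N}\mathbf{N}^T$ where $\mathbf{N}=\mathbf{A}^{1/2}\mathbf{G}\mathbf{B}^{1/2}$ is $k\times l$, $\mathbf{G}$ has iid mean-zero entries of variance $1/l$, $k/l\to\gamma$, and the spectral distributions of $\mathbf{A},\mathbf{B}$ converge to $\nu=\sum_i\omega_i\delta_{a_i}$ and $\underline{\nu}=\sum_j\pi_j\delta_{b_j}$. $\mu$ is a compactly supported probability measure on $[0,\infty)$; $\lambda^*>0$ is the right endpoint of its support, and $s(\lambda)=\int\frac{d\mu(t)}{t-\lambda}$ for $\lambda>\lambda^*$. Define $G(e)=\sum_{j=1}^n\frac{b_j\pi_j}{1+\gamma b_j e}$. It is known (master equations) that there is a continuous (indeed smooth) real function $e(\lambda)$ on $(\lambda^*,\infty)$, never equal to a pole $-1/(\gamma b_j)$ of $G$ and with $a_iG(e(\lambda))\ne\lambda$, satisfying $s(\lambda)=\sum_{i=1}^p\frac{\omega_i}{a_iG(e(\lambda))-\lambda}$ and $e(\lambda)=\sum_{i=1}^p\frac{a_i\omega_i}{a_iG(e(\lambda))-\lambda}$. *)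

(* Defs.v *)
From Stdlib Require Import Reals.
Open Scope R_scope.

Fixpoint rsum (n : nat) (f : nat -> R) : R :=
  match n with O => 0 | S k => rsum k f + f k end.

(* rmax n f = max_{0<=j<n} f j  (with value 0 for n = 0; only used for n >= 1, f > 0) *)
Fixpoint rmax (n : nat) (f : nat -> R) : R :=
  match n with O => 0 | S k => Rmax (rmax k f) (f k) end.

Definition Gfun (gamma : R) (n : nat) (b pi : nat -> R) (e : R) : R :=
  rsum n (fun j => b j * pi j / (1 + gamma * b j * e)).

Definition cont_on (lstar : R) (f : R -> R) : Prop :=
  forall t, 0 <= t <= lstar -> continuity_pt f t.

(* A probability measure mu supported in [0, lstar], represented (Riesz) by its
   integration functional I f = \int f dmu on functions continuous on [0, lstar]:
   linear, positive w.r.t. values on [0, lstar], and I 1 = 1. *)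
Definition prob_functional (lstar : R) (I : (R -> R) -> R) : Prop :=
  (forall f g, cont_on lstar f -> cont_on lstar g ->
      I (fun t => f t + g t) = I f + I g) /\
  (forall c f, cont_on lstar f -> I (fun t => c * f t) = c * I f) /\
  (forall f, cont_on lstar f -> (forall t, 0 <= t <= lstar -> 0 <= f t) -> 0 <= I f) /\
  I (fun _ => 1) = 1.

(* lstar belongs to the support of mu: every neighbourhood of lstar has positive mass. *)
Definition in_support (lstar : R) (I : (R -> R) -> R) : Prop :=
  forall eps, eps > 0 -> exists f : R -> R,
    continuity f /\ (forall t, 0 <= f t) /\
    (forall t, Rabs (t - lstar) >= eps -> f t = 0) /\ I f > 0.

Definition stieltjes (I : (R -> R) -> R) (l : R) : R := I (fun t => 1 / (t - l)).

(* Main.v *)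
Require Import Defs.
From Stdlib Require Import Reals Lra Lia Ranalysis5.
Open Scope R_scope.

Lemma rsum_ext n f g : (forall i, (i < n)%nat -> f i = g i) -> rsum n f = rsum n g.
Proof. induction n; simpl; intros H; auto. rewrite IHn by (intros; apply H; lia). rewrite H by lia. auto. Qed.

Lemma rsum_plus n f g : rsum n (fun i => f i + g i) = rsum n f + rsum n g.
Proof. induction n; simpl; [lra|]. rewrite IHn. lra. Qed.

Lemma rsum_scal n c f : rsum n (fun i => c * f i) = c * rsum n f.
Proof. induction n; simpl; [lra|]. rewrite IHn. lra. Qed.

Lemma rsum_le n f g : (forall i, (i < n)%nat -> f i <= g i) -> rsum n f <= rsum n g.
Proof. induction n; simpl; intros H; [lra|].
  assert (rsum n f <= rsum n g) by (apply IHn; intros; apply H; lia).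
  assert (f n <= g n) by (apply H; lia). lra. Qed.

Lemma rsum_nonneg n f : (forall i, (i < n)%nat -> 0 <= f i) -> 0 <= rsum n f.
Proof. intros H. replace 0 with (rsum n (fun _ => 0)).
  apply rsum_le; auto. clear H; induction n; simpl; lra. Qed.

Lemma rsum_ge_term n f i : (forall i, (i < n)%nat -> 0 <= f i) -> (i < n)%nat -> f i <= rsum n f.
Proof. induction n; intros H Hi; [lia|]. simpl.
  assert (0 <= rsum n f) by (apply rsum_nonneg; intros; apply H; lia).
  destruct (Nat.eq_dec i n) as [->|Hne].
  - lra.
  - assert (f i <= rsum n f) by (apply IHn; [intros; apply H; lia| lia]).
    assert (0 <= f n) by (apply H; lia). lra. Qed.

Lemma rmax_attained n b : (n >= 1)%nat -> (forall j, (j < n)%nat -> b j > 0) ->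
  exists j, (j < n)%nat /\ rmax n b = b j.
Proof. induction n; intros Hn H; [lia|]. simpl.
  destruct n.
  - exists 0%nat. split; [lia|]. simpl. apply Rmax_right. assert (b 0%nat > 0) by (apply H; lia). lra.
  - destruct IHn as [j [Hj Ej]]; [lia| intros; apply H; lia|].
    unfold Rmax. destruct (Rle_dec (rmax (S n) b) (b (S n))).
    + exists (S n). split; [lia|auto].
    + exists j. split; [lia|auto]. Qed.

Lemma inv_bound (u v : R) : u < 0 -> v > 0 -> u + v <= 0 -> 1 / u + 1 / v >= 0.
Proof. intros Hu Hv Huv.
  assert (/ (- u) <= / v) by (apply Rinv_le_contravar; lra).
  rewrite Rinv_opp in H. unfold Rdiv. lra. Qed.

Lemma s_lower lstar I l : prob_functional lstar I -> l > lstar -> lstar > 0 ->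
  stieltjes I l >= - 1 / (l - lstar).
Proof.
  intros [Hadd [Hsc [Hpos H1]]] Hl Hls.
  set (c := 1 / (l - lstar)).
  assert (Hc1 : cont_on lstar (fun t => 1 / (t - l))).
  { intros t Ht. apply continuity_pt_div.
    - apply continuity_pt_const. intros x y; auto.
    - apply continuity_pt_minus. apply derivable_continuous_pt; apply derivable_pt_id. apply continuity_pt_const. intros x y; auto.
    - lra. }
  assert (Hc2 : cont_on lstar (fun t => c * (fun _ : R => 1) t)).
  { intros t Ht. apply continuity_pt_const. intros x y; auto. }
  assert (Hc0 : cont_on lstar (fun _ : R => 1)).
  { intros t Ht. apply continuity_pt_const. intros x y; auto. }
  pose proof (Hadd _ _ Hc1 Hc2) as E.
  pose proof (Hsc c _ Hc0) as E2. cbv beta in E, E2 |- *. rewrite E2, H1 in E.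
  assert (P : 0 <= I (fun t => 1 / (t - l) + c * (fun _ : R => 1) t)).
  { apply Hpos.
    - intros t Ht. apply continuity_pt_plus; [apply Hc1|apply Hc2]; auto.
    - intros t Ht. cbv beta. rewrite Rmult_1_r. unfold c.
      pose proof (inv_bound (t - l) (l - lstar)). lra. }
  unfold stieltjes. unfold c in *. unfold Rdiv in *. lra.
Qed.
Theorem corollary3p4 (gamma : R) (p n : nat) (a omega b pi : nat -> R)
    (lstar : R) (I : (R -> R) -> R) (e : R -> R) :
  gamma > 0 ->
  (forall i, (i < p)%nat -> a i > 0 /\ omega i > 0) -> rsum p omega = 1 ->
  (forall j, (j < n)%nat -> b j > 0 /\ pi j > 0) -> rsum n pi = 1 ->
  lstar > 0 -> prob_functional lstar I -> in_support lstar I ->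
  (forall l, l > lstar ->
     continuity_pt e l /\
     (forall j, (j < n)%nat -> e l <> - 1 / (gamma * b j)) /\
     (forall i, (i < p)%nat -> a i * Gfun gamma n b pi (e l) <> l) /\
     stieltjes I l = rsum p (fun i => omega i / (a i * Gfun gamma n b pi (e l) - l)) /\
     e l = rsum p (fun i => a i * omega i / (a i * Gfun gamma n b pi (e l) - l))) ->
  forall l, l > lstar -> e l > - 1 / (gamma * rmax n b).

Proof.
  intros Hg Ha Hom Hb Hpi Hls HI Hsupp He l Hl.
  assert (Hn : (n >= 1)%nat).
  { destruct n; [simpl in Hpi; lra| lia]. }
  destruct (rmax_attained n b Hn (fun j Hj => proj1 (Hb j Hj))) as [jm [Hjm EB]].
  set (B := rmax n b) in *.
  assert (HB : B > 0) by (rewrite EB; apply (Hb jm Hjm)).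
  set (T := - 1 / (gamma * B)).
  assert (HT : T < 0).
  { unfold T, Rdiv. assert (0 < / (gamma * B)) by (apply Rinv_0_lt_compat; nra). lra. }
  assert (HTe : T * (gamma * B) = -1) by (unfold T; field; lra).
  set (Asum := rsum p a).
  set (A := rsum p (fun i => a i * omega i)).
  assert (HAsum : 0 <= Asum) by (apply rsum_nonneg; intros i Hi; destruct (Ha i Hi); lra).
  assert (HA : 0 <= A) by (apply rsum_nonneg; intros i Hi; destruct (Ha i Hi); nra).
  set (K := lstar * gamma * B).
  assert (HK : K > 0) by (unfold K; apply Rmult_lt_0_compat; nra).
  assert (Large : forall L, L >= lstar + 1 -> L >= 2 * Asum * K -> L > 2 * A * gamma * B ->
            e L > T).
  { intros L HL1 HL2 HL3.
    destruct (He L ltac:(lra)) as [_ [Hpole [Hne [Hs Heq]]]].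
    set (g := Gfun gamma n b pi (e L)) in *.
    destruct (Rle_or_lt (e L) T) as [Hle|]; [|auto]. exfalso.
    assert (Hx : forall i, (i < p)%nat -> a i * g - L <> 0).
    { intros i Hi. specialize (Hne i Hi). lra. }
    assert (Id : g * e L - L * stieltjes I L = 1).
    { transitivity (rsum p (fun i => g * (a i * omega i / (a i * g - L)) + (- L) * (omega i / (a i * g - L)))).
      - rewrite rsum_plus, !rsum_scal, Hs. rewrite Heq at 1. ring.
      - rewrite <- Hom. apply rsum_ext. intros i Hi. specialize (Hx i Hi). field. auto. }
    pose proof (s_lower lstar I L HI ltac:(lra) Hls) as Hsl.
    assert (HLl : L - lstar > 0) by lra.
    assert (Hge : g * e L >= - lstar / (L - lstar)).
    { assert (L * stieltjes I L >= L * (-1 / (L - lstar))).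
      { apply Rle_ge, Rmult_le_compat_l; lra. }
      replace (- lstar / (L - lstar)) with (1 + L * (-1 / (L - lstar))) by (field; lra).
      lra. }
    assert (Hgk : g <= K).
    { destruct (Rle_or_lt g 0); [lra|].
      assert (- lstar / (L - lstar) >= - lstar) .
      { assert (lstar / (L - lstar) * (L - lstar) = lstar) by (field; lra).
        assert (0 <= lstar / (L - lstar)) by (unfold Rdiv; apply Rmult_le_pos; [lra| left; apply Rinv_0_lt_compat; lra]).
        unfold Rdiv in *. rewrite Ropp_mult_distr_l_reverse. nra. }
      assert (g * (- T) <= lstar) by nra.
      assert (g = g * (- T) * (gamma * B)) by nra.
      assert (g * (- T) * (gamma * B) <= lstar * (gamma * B)) by (apply Rmult_le_compat_r; nra).
      unfold K. nra. }
    assert (Hterm : forall i, (i < p)%nat ->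
              a i * omega i / (a i * g - L) >= a i * omega i * (- 2 / L)).
    { intros i Hi. destruct (Ha i Hi) as [Hai Hoi].
      assert (a i <= Asum) by (apply (rsum_ge_term p a i); [intros k Hk; destruct (Ha k Hk); lra | auto]).
      assert (a i * g <= Asum * K).
      { destruct (Rle_or_lt g 0); [nra|]. apply Rmult_le_compat; lra. }
      assert (Hxi : a i * g - L <= - L / 2) by lra.
      assert (/ (a i * g - L) >= - 2 / L).
      { assert (HH : / (- (a i * g - L)) <= / (L / 2)) by (apply Rinv_le_contravar; lra).
        rewrite Rinv_opp in HH. replace (- 2 / L) with (- / (L / 2)) by (field; lra). lra. }
      unfold Rdiv. apply Rle_ge. apply Rmult_le_compat_l; [nra|lra]. }
    assert (e L >= A * (- 2 / L)).
    { rewrite Heq. unfold A. rewrite Rmult_comm, <- rsum_scal. apply Rle_ge, rsum_le.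
      intros i Hi. specialize (Hterm i Hi). lra. }
    assert (A * (- 2 / L) > T).
    { assert (A * (-2 / L) * (gamma * B) > -1).
      { replace (A * (-2 / L) * (gamma * B)) with (- (2 * A * gamma * B) / L) by (field; lra).
        assert (HQ : (2 * A * gamma * B) / L * L = 2 * A * gamma * B) by (field; lra).
        unfold Rdiv in *. rewrite Ropp_mult_distr_l_reverse. nra. }
      nra. }
    lra. }
  destruct (Rle_or_lt (e l) T) as [Hle|Hgt]; [|exact Hgt]. exfalso.
  assert (HlT : e l < T).
  { destruct Hle as [|E]; auto. exfalso.
    destruct (He l Hl) as [_ [Hp _]]. apply (Hp jm Hjm). rewrite E. unfold T. rewrite EB. auto. }
  set (L := l + lstar + 1 + 2 * Asum * K + 2 * A * gamma * B + 1).
  assert (P1 : 0 <= Asum * K) by (apply Rmult_le_pos; lra).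
  assert (P2 : 0 <= A * gamma * B) by (repeat apply Rmult_le_pos; lra).
  assert (HeL : e L > T) by (apply Large; unfold L; lra).
  destruct (IVT_interv (fun x => e x - T) l L) as [z [Hz Ez]].
  - intros x Hx. apply continuity_pt_minus.
    + apply (He x ltac:(lra)).
    + apply continuity_pt_const. intros u v; auto.
  - unfold L; lra.
  - lra.
  - lra.
  - destruct (He z ltac:(lra)) as [_ [Hp _]]. apply (Hp jm Hjm).
    unfold T in Ez. rewrite EB in Ez. lra.
Qed.
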